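(* Let $\tau>0$, $\delta>0$ and $\kappa\in(0,1)$, and let $H':\mathbb{R}\to\mathbb{R}$ be the trilinear function $$H'(x)=\begin{cases} x+1 & x\le -\kappa,\\ -\frac{1-\kappa}{\kappa}\,x & -\kappa\le x\le \kappa,\\ x-1 & x\ge \kappa.\end{cases}$$ Consider the equation $$\tau\,\partial_t x(t,p)=\sigma(t)+\delta\,(p-\tfrac12)-H'\big(x(t,p)\big).\qquad (\ast)$$ Then $(\ast)$ admits two families of traveling wave solutions, left moving ($\Omega<0$) and right moving ($\Omega>0$), of the form $$x_{\mathrm{TW}}(t,p)=X(P),\qquad P=p-\Omega t,\qquad \sigma_{\mathrm{TW}}(t)=\Sigma-\delta\,(\Omega t-\tfrac12),$$ which are strictly increasing with respect to $p$. They are given as follows, for real numbers $\Xi_-<\Xi_+$. For $\Omega<0$: $X=X_L$ and $\Sigma=\Sigma_L$, where $$X_L(P)=\begin{cases}-\kappa+\delta(P-\Xi_-) & P\le \Xi_-,\\[2pt] -\kappa-\dfrac{\kappa\delta}{1-\kappa}(P-\Xi_-)-\dfrac{\kappa\tau\Omega\delta}{(1-\kappa)^2}\Big(\exp\Big(-\dfrac{1-\kappa}{\kappa\tau\Omega}(P-\Xi_-)\Big)-1\Big) & \Xi_-\le P\le \Xi_+,\\[2pt] \kappa+\delta(P-\Xi_+)+\big(2(1-\kappa)+\delta(\Xi_+-\Xi_-)\big)\Big(1-\exp\Big(\dfrac{P-\Xi_+}{\tau\Omega}\Big)\Big) & \Xi_+\le P,\end{cases}$$ $$\Sigma_L=1-\kappa-\tau\Omega\delta-\delta\,\Xi_-.$$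 For $\Omega>0$: $X=X_R$ and $\Sigma=\Sigma_R$, where $$X_R(P)=\begin{cases}-\kappa+\delta(P-\Xi_-)+\big(2(1-\kappa)+\delta(\Xi_+-\Xi_-)\big)\Big(-1+\exp\Big(\dfrac{P-\Xi_-}{\tau\Omega}\Big)\Big) & P\le \Xi_-,\\[2pt] \kappa-\dfrac{\kappa\delta}{1-\kappa}(P-\Xi_+)-\dfrac{\kappa\tau\Omega\delta}{(1-\kappa)^2}\Big(\exp\Big(-\dfrac{1-\kappa}{\kappa\tau\Omega}(P-\Xi_+)\Big)-1\Big) & \Xi_-\le P\le \Xi_+,\\[2pt] \kappa+\delta(P-\Xi_+) & \Xi_+\le P,\end{cases}$$ $$\Sigma_R=-1+\kappa-\tau\Omega\delta-\delta\,\Xi_+.$$ In both cases this holds provided that the transcendental equation $$\frac{2(1-\kappa)^2}{\tau|\Omega|\delta}+\frac{1-\kappa}{\tau|\Omega|}\,(\Xi_+-\Xi_-)=\exp\Big(\frac{1-\kappa}{\kappa\tau|\Omega|}(\Xi_+-\Xi_-)\Big)-1$$ is satisfied. In particular, the wave speed $\Omega$ can be regarded as the independent parameter: it determines the interface width $\Xi_+-\Xi_-$ but not the interface position $\tfrac12(\Xi_-+\Xi_+)$.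
   Context: The equation $(\ast)$ is considered here with the index variable $p$ ranging over $\mathbb{R}$ and the function $\sigma$ prescribed as stated; no integral (mean-field) constraint is imposed on the solution. The parameter $\tau>0$ is a relaxation time, $\delta>0$ is the strength of a linear disorder function $\theta(p)=\delta(p-\tfrac12)$, and $[-\kappa,\kappa]$ is the spinodal region of $H'$. For the traveling waves, $X(P)<-\kappa$ for $P<\Xi_-$, $X(P)\in(-\kappa,\kappa)$ for $\Xi_-<P<\Xi_+$, and $X(P)>\kappa$ for $P>\Xi_+$. *)

(* Defs.v *)
From Stdlib Require Import Reals.
From Coquelicot Require Import Coquelicot.
Open Scope R_scope.

Definition Hp (kappa x : R) : R :=
  if Rle_dec x (- kappa) then x + 1
  else if Rle_dec x kappa then - ((1 - kappa) / kappa) * x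
  else x - 1.

Definition XL (tau delta kappa Om Xm Xp P : R) : R :=
  if Rle_dec P Xm then - kappa + delta * (P - Xm)
  else if Rle_dec P Xp then
    - kappa - (kappa * delta / (1 - kappa)) * (P - Xm)
    - (kappa * tau * Om * delta / (1 - kappa) ^ 2)
      * (exp (- ((1 - kappa) / (kappa * tau * Om)) * (P - Xm)) - 1)
  else
    kappa + delta * (P - Xp)
    + (2 * (1 - kappa) + delta * (Xp - Xm)) * (1 - exp ((P - Xp) / (tau * Om))).

Definition SigmaL (tau delta kappa Om Xm : R) : R :=
  1 - kappa - tau * Om * delta - delta * Xm.

Definition XR (tau delta kappa Om Xm Xp P : R) : R :=
  if Rle_dec P Xm then
    - kappa + delta * (P - Xm)
    + (2 * (1 - kappa) + delta * (Xp - Xm)) * (-1 + exp ((P - Xm) / (tau * Om)))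
  else if Rle_dec P Xp then
    kappa - (kappa * delta / (1 - kappa)) * (P - Xp)
    - (kappa * tau * Om * delta / (1 - kappa) ^ 2)
      * (exp (- ((1 - kappa) / (kappa * tau * Om)) * (P - Xp)) - 1)
  else kappa + delta * (P - Xp).

Definition SigmaR (tau delta kappa Om Xp : R) : R :=
  -1 + kappa - tau * Om * delta - delta * Xp.

(* The transcendental equation, with w = Xi_+ - Xi_- the interface width. *)
Definition TWeq (tau delta kappa Om w : R) : Prop :=
  2 * (1 - kappa) ^ 2 / (tau * Rabs Om * delta) + (1 - kappa) / (tau * Rabs Om) * w
  = exp ((1 - kappa) / (kappa * tau * Rabs Om) * w) - 1.

Definition solves (tau delta kappa : R) (sigma : R -> R) (x : R -> R -> R) : Prop :=
  forall t p : R,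
    ex_derive (fun s => x s p) t /\
    tau * Derive (fun s => x s p) t
    = sigma t + delta * (p - 1 / 2) - Hp kappa (x t p).

Definition TW_props (tau delta kappa Om Xm Xp Sigma : R) (X : R -> R) : Prop :=
  solves tau delta kappa (fun t => Sigma - delta * (Om * t - 1 / 2))
         (fun t p => X (p - Om * t)) /\
  (forall t p1 p2, p1 < p2 -> X (p1 - Om * t) < X (p2 - Om * t)) /\
  (forall P, P < Xm -> X P < - kappa) /\
  (forall P, Xm < P < Xp -> - kappa < X P < kappa) /\
  (forall P, Xp < P -> kappa < X P).

(* Main.v *)
Require Import Defs.
From Stdlib Require Import Reals Lra.
From Coquelicot Require Import Coquelicot.
Open Scope R_scope.

Definition pw (a b : R) (f g h : R -> R) (x : R) : R :=
  if Rle_dec x a then f x else if Rle_dec x b then g x else h x.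

Lemma der_cont (f : R -> R) (x l : R) : is_derive f x l -> continuity_pt f x.
Proof. intro H. apply is_derive_Reals in H. apply derivable_continuous_pt. exists l. exact H. Qed.

Lemma glue (g h : R -> R) (a l : R) : is_derive g a l -> is_derive h a l -> g a = h a ->
  is_derive (fun x => if Rle_dec x a then g x else h x) a l.
Proof.
  intros Hg Hh E. apply is_derive_Reals in Hg. apply is_derive_Reals in Hh.
  apply is_derive_Reals. intros eps Heps.
  destruct (Hg eps Heps) as [d1 H1]. destruct (Hh eps Heps) as [d2 H2].
  exists (mkposreal (Rmin d1 d2) (Rmin_pos _ _ (cond_pos d1) (cond_pos d2))).
  simpl. intros hh Hh0 Hhd.
  destruct (Rle_dec a a) as [_|n]; [|lra].
  destruct (Rle_dec (a+hh) a).
  - apply H1; auto. eapply Rlt_le_trans; [exact Hhd| apply Rmin_l].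
  - rewrite E. apply H2; auto. eapply Rlt_le_trans; [exact Hhd| apply Rmin_r].
Qed.

Lemma pw_der (a b : R) (g1 g2 g3 d1 d2 d3 : R -> R) : a < b ->
  (forall x, is_derive g1 x (d1 x)) -> (forall x, is_derive g2 x (d2 x)) ->
  (forall x, is_derive g3 x (d3 x)) ->
  g1 a = g2 a -> d1 a = d2 a -> g2 b = g3 b -> d2 b = d3 b ->
  forall x, is_derive (pw a b g1 g2 g3) x (pw a b d1 d2 d3 x).
Proof.
  intros Hab H1 H2 H3 Ea Da Eb Db x.
  destruct (total_order_T x a) as [[Hx|Hx]|Hx].
  - replace (pw a b d1 d2 d3 x) with (d1 x)
      by (unfold pw; destruct (Rle_dec x a); lra).
    apply is_derive_ext_loc with g1; [|apply H1].
    apply filter_imp with (fun t => t < a); [|apply open_lt; exact Hx].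
    intros t Ht; unfold pw; destruct (Rle_dec t a); [reflexivity|lra].
  - subst x.
    replace (pw a b d1 d2 d3 a) with (d1 a)
      by (unfold pw; destruct (Rle_dec a a); lra).
    apply is_derive_ext_loc with (fun y => if Rle_dec y a then g1 y else g2 y).
    + apply filter_imp with (fun t => t < b); [|apply open_lt; exact Hab].
      intros t Ht; unfold pw; destruct (Rle_dec t a); [reflexivity|].
      destruct (Rle_dec t b); [reflexivity|lra].
    + apply glue; auto. rewrite Da; auto.
  - destruct (total_order_T x b) as [[Hy|Hy]|Hy].
    + replace (pw a b d1 d2 d3 x) with (d2 x)
        by (unfold pw; destruct (Rle_dec x a); [lra|]; destruct (Rle_dec x b); lra).
      apply is_derive_ext_loc with g2; [|apply H2].
      apply filter_imp with (fun t => a < t /\ t < b).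
      * intros t Ht; unfold pw; destruct (Rle_dec t a); [lra|].
        destruct (Rle_dec t b); [reflexivity|lra].
      * apply filter_and; [apply open_gt; exact Hx|apply open_lt; exact Hy].
    + subst x.
      replace (pw a b d1 d2 d3 b) with (d2 b)
        by (unfold pw; destruct (Rle_dec b a); [lra|]; destruct (Rle_dec b b); lra).
      apply is_derive_ext_loc with (fun y => if Rle_dec y b then g2 y else g3 y).
      * apply filter_imp with (fun t => a < t); [|apply open_gt; exact Hx].
        intros t Ht; unfold pw; destruct (Rle_dec t a); [lra|]. reflexivity.
      * apply glue; auto. rewrite Db; auto.
    + replace (pw a b d1 d2 d3 x) with (d3 x)
        by (unfold pw; destruct (Rle_dec x a); [lra|]; destruct (Rle_dec x b); lra).
      apply is_derive_ext_loc with g3; [|apply H3].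
      apply filter_imp with (fun t => b < t); [|apply open_gt; exact Hy].
      intros t Ht; unfold pw; destruct (Rle_dec t a); [lra|].
      destruct (Rle_dec t b); [lra|reflexivity].
Qed.

Lemma Hp1 k x : x <= - k -> Hp k x = x + 1.
Proof. intro H. unfold Hp. destruct (Rle_dec x (-k)); [ring|contradiction]. Qed.

Lemma Hp2 k x : 0 < k -> - k <= x <= k -> Hp k x = - ((1 - k) / k) * x.
Proof.
  intros Hk H. unfold Hp. destruct (Rle_dec x (-k)).
  - assert (x = -k) by lra. subst. field. lra.
  - destruct (Rle_dec x k); [ring|lra].
Qed.

Lemma Hp3 k x : 0 < k -> k <= x -> Hp k x = x - 1.
Proof.
  intros Hk H. unfold Hp. destruct (Rle_dec x (-k)); [lra|].
  destruct (Rle_dec x k).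
  - assert (x = k) by lra. subst. field. lra.
  - ring.
Qed.

Lemma exp_ge1 x : 0 <= x -> 1 <= exp x.
Proof.
  intro H. destruct (Req_dec x 0).
  - subst. rewrite exp_0. lra.
  - pose proof (exp_ineq1 x H0). lra.
Qed.

Lemma generic tau delta kappa Om Xm Xp Sig (X g1 g2 g3 d1 d2 d3 : R -> R) :
  0 < tau -> 0 < delta -> 0 < kappa < 1 -> Om <> 0 -> Xm < Xp ->
  (forall P, X P = pw Xm Xp g1 g2 g3 P) ->
  (forall P, is_derive g1 P (d1 P)) -> (forall P, is_derive g2 P (d2 P)) ->
  (forall P, is_derive g3 P (d3 P)) ->
  g1 Xm = - kappa -> g2 Xm = - kappa -> g2 Xp = kappa -> g3 Xp = kappa ->
  (forall P, - (tau * Om * d1 P) = Sig + delta * P - (g1 P + 1)) ->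
  (forall P, - (tau * Om * d2 P) = Sig + delta * P + (1 - kappa) / kappa * g2 P) ->
  (forall P, - (tau * Om * d3 P) = Sig + delta * P - (g3 P - 1)) ->
  (forall P, P <= Xm -> 0 < d1 P) -> (forall P, Xm <= P <= Xp -> 0 < d2 P) ->
  (forall P, Xp <= P -> 0 < d3 P) ->
  TW_props tau delta kappa Om Xm Xp Sig X.
Proof.
  intros Ht Hd Hk HO Hx HX D1 D2 D3 E1 E2 E3 E4 O1 O2 O3 P1 P2 P3.
  assert (HtO : tau * Om <> 0) by (apply Rmult_integral_contrapositive; split; lra).
  assert (Da : d1 Xm = d2 Xm).
  { assert (tau * Om * (d1 Xm - d2 Xm) = 0).
    { pose proof (O1 Xm). pose proof (O2 Xm). rewrite E1 in *. rewrite E2 in *.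
      assert ((1 - kappa) / kappa * - kappa = - (1 - kappa)) by (field; lra). lra. }
    destruct (Rmult_integral _ _ H); [contradiction|lra]. }
  assert (Db : d2 Xp = d3 Xp).
  { assert (tau * Om * (d2 Xp - d3 Xp) = 0).
    { pose proof (O2 Xp). pose proof (O3 Xp). rewrite E3 in *. rewrite E4 in *.
      assert ((1 - kappa) / kappa * kappa = (1 - kappa)) by (field; lra). lra. }
    destruct (Rmult_integral _ _ H); [contradiction|lra]. }
  set (D := pw Xm Xp d1 d2 d3).
  assert (HD : forall P, is_derive X P (D P)).
  { intro P. apply is_derive_ext with (pw Xm Xp g1 g2 g3).
    - intro; rewrite HX; reflexivity.
    - apply pw_der; auto; congruence. }
  assert (Dpos : forall P, 0 < D P).
  { intro P. unfold D, pw. destruct (Rle_dec P Xm); [apply P1; lra|].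
    destruct (Rle_dec P Xp); [apply P2; lra|apply P3; lra]. }
  assert (mono : forall a b, a < b -> X a < X b).
  { intros a b Hab.
    destruct (MVT_gen X a b D) as [c [Hc E]].
    - intros; apply HD.
    - intros; eapply der_cont; apply HD.
    - pose proof (Dpos c). assert (0 < D c * (b - a)) by (apply Rmult_lt_0_compat; lra).
      lra. }
  assert (monoe : forall a b, a <= b -> X a <= X b).
  { intros a b H. destruct H; [left; apply mono; auto|right; subst; reflexivity]. }
  assert (XXm : X Xm = - kappa).
  { rewrite HX. unfold pw. destruct (Rle_dec Xm Xm); [assumption|lra]. }
  assert (XXp : X Xp = kappa).
  { rewrite HX. unfold pw. destruct (Rle_dec Xp Xm); [lra|].
    destruct (Rle_dec Xp Xp); [assumption|lra]. }
  assert (ODE : forall P, - (tau * Om * D P) = Sig + delta * P - Hp kappa (X P)).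
  { intro P. destruct (Rle_dec P Xm).
    - assert (X P <= - kappa) by (rewrite <- XXm; apply monoe; auto).
      rewrite (Hp1 _ _ H). rewrite HX. unfold D, pw.
      destruct (Rle_dec P Xm); [apply O1|contradiction].
    - destruct (Rle_dec P Xp).
      + assert (- kappa <= X P <= kappa) by (rewrite <- XXm, <- XXp; split; apply monoe; lra).
        rewrite (Hp2 _ _ (proj1 Hk) H). rewrite HX. unfold D, pw.
        destruct (Rle_dec P Xm); [contradiction|].
        destruct (Rle_dec P Xp); [|contradiction].
        rewrite O2. ring.
      + assert (kappa <= X P) by (rewrite <- XXp; apply monoe; lra).
        rewrite (Hp3 _ _ (proj1 Hk) H). rewrite HX. unfold D, pw.
        destruct (Rle_dec P Xm); [contradiction|].
        destruct (Rle_dec P Xp); [contradiction|]. apply O3. }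
  unfold TW_props. split; [|split; [|split; [|split]]].
  - intros t p.
    assert (Hl : is_derive (fun s => p - Om * s) t (- Om)) by (auto_derive; [auto|ring]).
    pose proof (is_derive_comp X (fun s => p - Om * s) t (D (p - Om * t)) (- Om) (HD _) Hl) as Hc.
    split; [eexists; exact Hc|].
    cbv beta in Hc |- *. replace (Derive (fun s : R => X (p - Om * s)) t) with (scal (- Om) (D (p - Om * t))) by (symmetry; apply is_derive_unique; exact Hc).
    unfold scal; simpl; unfold mult; simpl.
    replace (tau * (- Om * D (p - Om * t))) with (- (tau * Om * D (p - Om * t))) by ring.
    rewrite ODE. ring.
  - intros t p1 p2 H. apply mono. lra.
  - intros P H. rewrite <- XXm. apply mono; auto.
  - intros P H. rewrite <- XXm, <- XXp. split; apply mono; lra.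
  - intros P H. rewrite <- XXp. apply mono; auto.
Qed.

Lemma caseL tau delta kappa : 0 < tau -> 0 < delta -> 0 < kappa < 1 ->
  forall Om Xm Xp : R, Om < 0 -> Xm < Xp -> TWeq tau delta kappa Om (Xp - Xm) ->
       TW_props tau delta kappa Om Xm Xp (SigmaL tau delta kappa Om Xm)
                (XL tau delta kappa Om Xm Xp).
Proof.
  intros Ht Hd Hk Om Xm Xp HO Hx HT.
  set (C := 2 * (1 - kappa) + delta * (Xp - Xm)).
  assert (HC : 0 < C) by (unfold C; nra).
  assert (Hin : / (tau * Om) < 0) by (apply Rinv_lt_0_compat; nra).
  assert (Ha : (1 - kappa) / (kappa * tau * Om) < 0).
  { assert (0 < kappa * tau) by (apply Rmult_lt_0_compat; lra).
    assert (/ (kappa * tau * Om) < 0) by (apply Rinv_lt_0_compat; nra).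
    unfold Rdiv; rewrite <- (Rmult_0_r (1-kappa)); apply Rmult_lt_compat_l; lra. }
  apply generic with
    (g1 := fun P => - kappa + delta * (P - Xm))
    (g2 := fun P => - kappa - (kappa * delta / (1 - kappa)) * (P - Xm)
      - (kappa * tau * Om * delta / (1 - kappa) ^ 2)
      * (exp (- ((1 - kappa) / (kappa * tau * Om)) * (P - Xm)) - 1))
    (g3 := fun P => kappa + delta * (P - Xp)
      + (2 * (1 - kappa) + delta * (Xp - Xm)) * (1 - exp ((P - Xp) / (tau * Om))))
    (d1 := fun P => delta)
    (d2 := fun P => delta / (1 - kappa) * (exp (- ((1 - kappa) / (kappa * tau * Om)) * (P - Xm)) - kappa))
    (d3 := fun P => delta - C / (tau * Om) * exp ((P - Xp) / (tau * Om))).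
  1-5: lra.
  - intro P; reflexivity.
  - intro P; auto_derive; [auto|ring].
  - intro P; auto_derive; [auto|]. replace (P + - Xm) with (P - Xm) by ring. field; repeat split; lra.
  - intro P; auto_derive; [auto|]. change ((P + - Xp) * / (tau * Om)) with ((P - Xp) / (tau * Om)). unfold C; field; repeat split; lra.
  - cbv beta. ring.
  - cbv beta. replace (Xm - Xm) with 0 by ring. rewrite !Rmult_0_r, exp_0. ring.
  - cbv beta. unfold TWeq in HT. rewrite Rabs_left in HT by lra.
    replace (- ((1 - kappa) / (kappa * tau * Om)) * (Xp - Xm))
      with ((1 - kappa) / (kappa * tau * - Om) * (Xp - Xm)) by (field; repeat split; lra).
    rewrite <- HT. field. repeat split; lra.
  - cbv beta. replace ((Xp - Xp) / (tau * Om)) with 0 by (unfold Rdiv; ring).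
    rewrite exp_0. ring.
  - intro P; cbv beta. unfold SigmaL. ring.
  - intro P; cbv beta. unfold SigmaL. field. repeat split; lra.
  - intro P; cbv beta. unfold SigmaL, C. field. repeat split; lra.
  - intros P HP; lra.
  - intros P HP; cbv beta.
    assert (1 <= exp (- ((1 - kappa) / (kappa * tau * Om)) * (P - Xm))) by (apply exp_ge1; nra).
    apply Rmult_lt_0_compat; [apply Rdiv_lt_0_compat|]; lra.
  - intros P HP; cbv beta.
    pose proof (exp_pos ((P - Xp) / (tau * Om))).
    assert (C / (tau * Om) < 0) by (unfold Rdiv; nra). nra.
Qed.

Lemma caseR tau delta kappa : 0 < tau -> 0 < delta -> 0 < kappa < 1 ->
  forall Om Xm Xp : R, 0 < Om -> Xm < Xp -> TWeq tau delta kappa Om (Xp - Xm) ->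
       TW_props tau delta kappa Om Xm Xp (SigmaR tau delta kappa Om Xp)
                (XR tau delta kappa Om Xm Xp).
Proof.
  intros Ht Hd Hk Om Xm Xp HO Hx HT.
  set (C := 2 * (1 - kappa) + delta * (Xp - Xm)).
  assert (HC : 0 < C) by (unfold C; nra).
  assert (Hin : 0 < / (tau * Om)) by (apply Rinv_0_lt_compat; nra).
  assert (Ha : 0 < (1 - kappa) / (kappa * tau * Om)).
  { assert (0 < kappa * tau) by (apply Rmult_lt_0_compat; lra).
    apply Rdiv_lt_0_compat; nra. }
  apply generic with
    (g1 := fun P => - kappa + delta * (P - Xm)
      + (2 * (1 - kappa) + delta * (Xp - Xm)) * (-1 + exp ((P - Xm) / (tau * Om))))
    (g2 := fun P => kappa - (kappa * delta / (1 - kappa)) * (P - Xp)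
      - (kappa * tau * Om * delta / (1 - kappa) ^ 2)
      * (exp (- ((1 - kappa) / (kappa * tau * Om)) * (P - Xp)) - 1))
    (g3 := fun P => kappa + delta * (P - Xp))
    (d1 := fun P => delta + C / (tau * Om) * exp ((P - Xm) / (tau * Om)))
    (d2 := fun P => delta / (1 - kappa) * (exp (- ((1 - kappa) / (kappa * tau * Om)) * (P - Xp)) - kappa))
    (d3 := fun P => delta).
  1-5: lra.
  - intro P; reflexivity.
  - intro P; auto_derive; [auto|]. change ((P + - Xm) * / (tau * Om)) with ((P - Xm) / (tau * Om)). unfold C; field; repeat split; lra.
  - intro P; auto_derive; [auto|]. replace (P + - Xp) with (P - Xp) by ring. field; repeat split; lra.
  - intro P; auto_derive; [auto|ring].
  - cbv beta. replace ((Xm - Xm) / (tau * Om)) with 0 by (unfold Rdiv; ring).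
    rewrite exp_0. ring.
  - cbv beta. unfold TWeq in HT. rewrite Rabs_right in HT by lra.
    replace (- ((1 - kappa) / (kappa * tau * Om)) * (Xm - Xp))
      with ((1 - kappa) / (kappa * tau * Om) * (Xp - Xm)) by (field; repeat split; lra).
    replace (exp ((1 - kappa) / (kappa * tau * Om) * (Xp - Xm)) - 1)
      with (2 * (1 - kappa) ^ 2 / (tau * Om * delta) + (1 - kappa) / (tau * Om) * (Xp - Xm)).
    field. repeat split; lra.
  - cbv beta. replace (Xp - Xp) with 0 by ring. rewrite !Rmult_0_r, exp_0. ring.
  - cbv beta. ring.
  - intro P; cbv beta. unfold SigmaR, C. field. repeat split; lra.
  - intro P; cbv beta. unfold SigmaR. field. repeat split; lra.
  - intro P; cbv beta. unfold SigmaR. ring.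
  - intros P HP; cbv beta.
    pose proof (exp_pos ((P - Xm) / (tau * Om))).
    assert (0 < C / (tau * Om)) by (apply Rdiv_lt_0_compat; nra). nra.
  - intros P HP; cbv beta.
    assert (1 <= exp (- ((1 - kappa) / (kappa * tau * Om)) * (P - Xp))) by (apply exp_ge1; nra).
    apply Rmult_lt_0_compat; [apply Rdiv_lt_0_compat|]; lra.
  - intros P HP; lra.
Qed.

Lemma part3 tau delta kappa : 0 < tau -> 0 < delta -> 0 < kappa < 1 ->
  forall Om : R, Om <> 0 -> exists! w : R, 0 < w /\ TWeq tau delta kappa Om w.
Proof.
  intros Ht Hd Hk Om HO.
  assert (Hm : 0 < Rabs Om) by (apply Rabs_pos_lt; exact HO).
  set (m := Rabs Om) in *.
  set (A := 2 * (1 - kappa) ^ 2 / (tau * m * delta)).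
  set (B := (1 - kappa) / (tau * m)).
  set (k := (1 - kappa) / (kappa * tau * m)).
  assert (HA : 0 < A).
  { unfold A. apply Rdiv_lt_0_compat; [nra|]. apply Rmult_lt_0_compat; [nra|lra]. }
  assert (HB : 0 < B) by (unfold B; apply Rdiv_lt_0_compat; nra).
  assert (HkB : B < k).
  { assert (k - B = B * (1 - kappa) / kappa) by (unfold k, B; field; repeat split; lra).
    assert (0 < B * (1 - kappa) / kappa) by (apply Rdiv_lt_0_compat; nra). lra. }
  assert (Heq : forall w, TWeq tau delta kappa Om w <-> A + B * w = exp (k * w) - 1).
  { intro w. unfold TWeq. fold m. fold A B k. tauto. }
  set (f := fun w => exp (k * w) - 1 - A - B * w).
  assert (mono : forall u v, 0 <= u -> u < v -> f u < f v).
  { intros u v Hu Huv. unfold f.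
    replace (k * v) with (k * u + k * (v - u)) by ring. rewrite exp_plus.
    assert (1 <= exp (k * u)) by (apply exp_ge1; nra).
    assert (1 + k * (v - u) < exp (k * (v - u))) by (apply exp_ineq1; nra).
    set (eu := exp (k * u)) in *. set (ed := exp (k * (v - u))) in *.
    assert (0 <= (eu - 1) * (k * (v - u))) by (apply Rmult_le_pos; nra).
    assert (0 < eu * (ed - 1 - k * (v - u))) by (apply Rmult_lt_0_compat; lra).
    assert (0 < (k - B) * (v - u)) by (apply Rmult_lt_0_compat; lra).
    nra. }
  assert (Hc : continuity f) by (unfold f; reg).
  set (W := A / (k - B) + 1).
  assert (HW : 0 < W) by (unfold W; assert (0 < A / (k - B)) by (apply Rdiv_lt_0_compat; lra); lra).
  assert (f0 : f 0 < 0) by (unfold f; rewrite Rmult_0_r, exp_0; lra).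
  assert (fW : 0 < f W).
  { unfold f. assert (1 + k * W < exp (k * W)) by (apply exp_ineq1; nra).
    assert ((k - B) * W = A + (k - B)) by (unfold W; field; lra). nra. }
  destruct (IVT f 0 W Hc HW f0 fW) as [z [Hz Fz]].
  assert (z <> 0) by (intro; subst; lra).
  exists z. split.
  - split; [lra|]. apply (proj2 (Heq z)). unfold f in Fz. lra.
  - intros w [Hw Tw]. apply (proj1 (Heq w)) in Tw.
    assert (Fw : f w = 0) by (unfold f; cbv beta; lra).
    destruct (total_order_T z w) as [[H1|H1]|H1]; auto.
    + pose proof (mono z w ltac:(lra) H1). lra.
    + pose proof (mono w z ltac:(lra) H1). lra.
Qed.

Theorem theorem2p1 :
  forall tau delta kappa : R,
    0 < tau -> 0 < delta -> 0 < kappa < 1 ->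
    (forall Om Xm Xp : R, Om < 0 -> Xm < Xp -> TWeq tau delta kappa Om (Xp - Xm) ->
       TW_props tau delta kappa Om Xm Xp (SigmaL tau delta kappa Om Xm)
                (XL tau delta kappa Om Xm Xp)) /\
    (forall Om Xm Xp : R, 0 < Om -> Xm < Xp -> TWeq tau delta kappa Om (Xp - Xm) ->
       TW_props tau delta kappa Om Xm Xp (SigmaR tau delta kappa Om Xp)
                (XR tau delta kappa Om Xm Xp)) /\
    (forall Om : R, Om <> 0 -> exists! w : R, 0 < w /\ TWeq tau delta kappa Om w).
Proof.
  intros tau delta kappa Ht Hd Hk. split; [|split].
  - apply caseL; auto.
  - apply caseR; auto.
  - apply part3; auto.
Qed.
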